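(* Let $f(x)=x^5+px^4+qx^3+rx^2+sx+t$ with real coefficients and let $D$, $L_1$, $L_2$, $L_3$, $M_1$ be as in the context. Suppose $D=0$, $L_1=0$, $L_2=0$ and $L_3\neq0$. Then all roots of $f$ are real, and: if $M_1=0$, $f$ has one quadruple root and one simple root; if $M_1\neq 0$, $f$ has one triple root and one double root.
   Context: Let $\alpha_1,\dots,\alpha_5\in\mathbb{C}$ be the roots of $f$ listed with multiplicity. $D=\prod_{1\le i<j\le 5}(\alpha_i-\alpha_j)^2$ is the discriminant of $f$. $L_3=2p^2-5q$. $L_2=40qs-16p^2s-8rp^3+38rpq+3p^2q^2-12q^3-45r^2$. $L_1=-264ps^2r-12p^3tq^2+36r^3pq-124srpq^2+28srp^3q+260sptq-132p^2qrt+240pr^2t+234sqr^2+32p^4tr+48ptq^3-56sp^3t-80q^2rt+194qs^2p^2-600str-6q^3sp^2+2p^2q^2r^2-12sr^2p^2-54r^4+320s^3-8q^3r^2-8r^3p^3+250qt^2-176q^2s^2+24q^4s-36p^4s^2-100p^2t^2$. $M_1=8p^3r-80sp^2-3p^2q^2+10prq+200sq-75r^2$. *)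

(* Defs.v *)
(* Roots live in a numeric closed field C (e.g. algC, or C);
   "real coefficients" = coefficients in Num.real. *)
From HB Require Import structures.
From mathcomp Require Import all_boot all_order all_algebra.
Set Implicit Arguments. Unset Strict Implicit. Unset Printing Implicit Defensive.
Import Order.TTheory GRing.Theory Num.Theory.
Local Open Scope ring_scope.

Section QuinticDefs.
Variable C : numClosedFieldType.

Definition quintic (p q r s t : C) : {poly C} :=
  'X^5 + p%:P * 'X^4 + q%:P * 'X^3 + r%:P * 'X^2 + s%:P * 'X + t%:P.

Definition discr5 (a : 'I_5 -> C) : C :=
  \prod_(i < 5) \prod_(j < 5 | (i < j)%N) (a i - a j) ^+ 2.

Definition L3 (p q r s t : C) : C := 2 * p ^+ 2 - 5 * q.

Definition L2 (p q r s t : C) : C :=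
  40 * q * s - 16 * p ^+ 2 * s - 8 * r * p ^+ 3 + 38 * r * p * q
  + 3 * p ^+ 2 * q ^+ 2 - 12 * q ^+ 3 - 45 * r ^+ 2.

Definition L1 (p q r s t : C) : C :=
  - 264 * p * s ^+ 2 * r - 12 * p ^+ 3 * t * q ^+ 2 + 36 * r ^+ 3 * p * q
  - 124 * s * r * p * q ^+ 2 + 28 * s * r * p ^+ 3 * q + 260 * s * p * t * q
  - 132 * p ^+ 2 * q * r * t + 240 * p * r ^+ 2 * t + 234 * s * q * r ^+ 2
  + 32 * p ^+ 4 * t * r + 48 * p * t * q ^+ 3 - 56 * s * p ^+ 3 * t
  - 80 * q ^+ 2 * r * t + 194 * q * s ^+ 2 * p ^+ 2 - 600 * s * t * r
  - 6 * q ^+ 3 * s * p ^+ 2 + 2 * p ^+ 2 * q ^+ 2 * r ^+ 2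
  - 12 * s * r ^+ 2 * p ^+ 2 - 54 * r ^+ 4 + 320 * s ^+ 3
  - 8 * q ^+ 3 * r ^+ 2 - 8 * r ^+ 3 * p ^+ 3 + 250 * q * t ^+ 2
  - 176 * q ^+ 2 * s ^+ 2 + 24 * q ^+ 4 * s - 36 * p ^+ 4 * s ^+ 2
  - 100 * p ^+ 2 * t ^+ 2.

Definition M1 (p q r s t : C) : C :=
  8 * p ^+ 3 * r - 80 * s * p ^+ 2 - 3 * p ^+ 2 * q ^+ 2 + 10 * p * r * q
  + 200 * s * q - 75 * r ^+ 2.

End QuinticDefs.

(* Main.v *)
Require Import Defs.
From HB Require Import structures.
From mathcomp Require Import all_boot all_order all_algebra.
From mathcomp Require Import ring.
Import Order.TTheory GRing.Theory Num.Theory.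
Local Open Scope ring_scope.

Definition cP {C : numClosedFieldType} (x0 x1 x2 x3 x4 : C) : C := -(x0+x1+x2+x3+x4).
Definition cQ {C : numClosedFieldType} (x0 x1 x2 x3 x4 : C) : C :=
  x0*x1+x0*x2+x0*x3+x0*x4+x1*x2+x1*x3+x1*x4+x2*x3+x2*x4+x3*x4.
Definition cR {C : numClosedFieldType} (x0 x1 x2 x3 x4 : C) : C :=
  -(x0*x1*x2+x0*x1*x3+x0*x1*x4+x0*x2*x3+x0*x2*x4+x0*x3*x4+x1*x2*x3+x1*x2*x4+x1*x3*x4+x2*x3*x4).
Definition cS {C : numClosedFieldType} (x0 x1 x2 x3 x4 : C) : C :=
  x0*x1*x2*x3+x0*x1*x2*x4+x0*x1*x3*x4+x0*x2*x3*x4+x1*x2*x3*x4.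
Definition cT {C : numClosedFieldType} (x0 x1 x2 x3 x4 : C) : C := -(x0*x1*x2*x3*x4).

Definition isV {C : numClosedFieldType} (p q r s t x0 x1 x2 x3 x4 : C) : Prop :=
  [/\ p = cP x0 x1 x2 x3 x4, q = cQ x0 x1 x2 x3 x4, r = cR x0 x1 x2 x3 x4,
      s = cS x0 x1 x2 x3 x4 & t = cT x0 x1 x2 x3 x4].

Definition Concl {C : numClosedFieldType} (p q r s t : C) : Prop :=
  exists a b : C, a != b /\ (isV p q r s t a a a a b \/ isV p q r s t a a a b b).

Ltac isVt H := move: H => [-> -> -> -> ->]; rewrite /isV /cP /cQ /cR /cS /cT;
  split; ring.

Lemma concl41 (C : numClosedFieldType) (p q r s t a b : C) :
  isV p q r s t a a a a b -> L3 p q r s t != 0 -> Concl p q r s t.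
Proof.
move=> H H3; exists a, b; split; last by left.
apply: contraNneq H3 => E; subst b; move: H => [-> -> -> -> ->].
apply/eqP; rewrite /L3 /cP /cQ; ring.
Qed.

Lemma concl32 (C : numClosedFieldType) (p q r s t a b : C) :
  isV p q r s t a a a b b -> L3 p q r s t != 0 -> Concl p q r s t.
Proof.
move=> H H3; exists a, b; split; last by right.
apply: contraNneq H3 => E; subst b; move: H => [-> -> -> -> ->].
apply/eqP; rewrite /L3 /cP /cQ; ring.
Qed.

Lemma eq3 (C : numClosedFieldType) (c x y z : C) : c != 0 ->
  c * ((x - y) * (x - z) * (y - z)) ^+ 2 = 0 -> [\/ x = y, x = z | y = z].
Proof.
move=> c0 /eqP; rewrite mulf_eq0 (negbTE c0) /= expf_eq0 /= !mulf_eq0 !subr_eq0.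
by case/orP=> [/orP[]|] /eqP E; [constructor 1|constructor 2|constructor 3].
Qed.

Lemma sub221 (C : numClosedFieldType) (p q r s t y z w : C) :
  isV p q r s t y y z z w -> L2 p q r s t = 0 -> L3 p q r s t != 0 -> Concl p q r s t.
Proof.
move=> H H2 H3.
have : 4 * ((y - z) * (y - w) * (z - w)) ^+ 2 = 0.
  rewrite -H2; move: H => [-> -> -> -> ->]; rewrite /L2 /cP /cQ /cR /cS; ring.
case/eq3; first by rewrite pnatr_eq0.
- move=> E; subst z; apply: (@concl41 C p q r s t y w) => //; isVt H.
- move=> E; subst w; apply: (@concl32 C p q r s t y z) => //; isVt H.
- move=> E; subst w; apply: (@concl32 C p q r s t z y) => //; isVt H.
Qed.

Lemma sub311 (C : numClosedFieldType) (p q r s t y z w : C) :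
  isV p q r s t y y y z w -> L2 p q r s t = 0 -> L3 p q r s t != 0 -> Concl p q r s t.
Proof.
move=> H H2 H3.
have : 3 * ((y - z) * (y - w) * (z - w)) ^+ 2 = 0.
  rewrite -H2; move: H => [-> -> -> -> ->]; rewrite /L2 /cP /cQ /cR /cS; ring.
case/eq3; first by rewrite pnatr_eq0.
- move=> E; subst z; apply: (@concl41 C p q r s t y w) => //; isVt H.
- move=> E; subst w; apply: (@concl41 C p q r s t y z) => //; isVt H.
- move=> E; subst w; apply: (@concl32 C p q r s t y z) => //; isVt H.
Qed.

Lemma L1dbl (C : numClosedFieldType) (x0 x1 x2 x3 : C) :
  L1 (cP x0 x1 x2 x3 x3) (cQ x0 x1 x2 x3 x3) (cR x0 x1 x2 x3 x3) (cS x0 x1 x2 x3 x3) (cT x0 x1 x2 x3 x3)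
  = 2 * ((x0-x1)*(x0-x2)*(x0-x3)*(x1-x2)*(x1-x3)*(x2-x3))^+2.
Proof. rewrite /L1 /cP /cQ /cR /cS /cT. ring. Qed.

Lemma main4 (C : numClosedFieldType) (p q r s t x0 x1 x2 x3 : C) :
  isV p q r s t x0 x1 x2 x3 x3 -> L1 p q r s t = 0 -> L2 p q r s t = 0 ->
  L3 p q r s t != 0 -> Concl p q r s t.
Proof.
move=> H H1 H2 H3.
case: (H) => Hp Hq Hr Hs Ht.
rewrite Hp Hq Hr Hs Ht L1dbl in H1; move/eqP: H1.
rewrite mulf_eq0 pnatr_eq0 /= expf_eq0 /= !mulf_eq0 !subr_eq0.
case/orP=> [/orP[/orP[/orP[/orP[]|]|]|]|] /eqP E.
- subst x0; apply: (@sub221 C p q r s t x1 x3 x2) => //; isVt H.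
- subst x0; apply: (@sub221 C p q r s t x2 x3 x1) => //; isVt H.
- subst x0; apply: (@sub311 C p q r s t x3 x1 x2) => //; isVt H.
- subst x1; apply: (@sub221 C p q r s t x2 x3 x0) => //; isVt H.
- subst x1; apply: (@sub311 C p q r s t x3 x0 x2) => //; isVt H.
- subst x2; apply: (@sub311 C p q r s t x3 x0 x1) => //; isVt H.
Qed.

Lemma main10 (C : numClosedFieldType) (p q r s t x0 x1 x2 x3 x4 : C) :
  isV p q r s t x0 x1 x2 x3 x4 ->
  [\/ [\/ x0 = x1, x0 = x2, x0 = x3 | x0 = x4],
       [\/ x1 = x2, x1 = x3 | x1 = x4],
       [\/ x2 = x3 | x2 = x4] | x3 = x4] ->
  L1 p q r s t = 0 -> L2 p q r s t = 0 ->
  L3 p q r s t != 0 -> Concl p q r s t.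
Proof.
move=> H E; case: E => [[]|[]|[]|] E; subst.
- apply: (@main4 C p q r s t x2 x3 x4 x1); isVt H.
- apply: (@main4 C p q r s t x1 x3 x4 x2); isVt H.
- apply: (@main4 C p q r s t x1 x2 x4 x3); isVt H.
- apply: (@main4 C p q r s t x1 x2 x3 x4); isVt H.
- apply: (@main4 C p q r s t x0 x3 x4 x2); isVt H.
- apply: (@main4 C p q r s t x0 x2 x4 x3); isVt H.
- apply: (@main4 C p q r s t x0 x2 x3 x4); isVt H.
- apply: (@main4 C p q r s t x0 x1 x4 x3); isVt H.
- apply: (@main4 C p q r s t x0 x1 x3 x4); isVt H.
- apply: (@main4 C p q r s t x0 x1 x2 x4); isVt H.
Qed.

Lemma quintic_isV (C : numClosedFieldType) (p q r s t x0 x1 x2 x3 x4 : C) :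
  isV p q r s t x0 x1 x2 x3 x4 ->
  quintic p q r s t = ('X - x0%:P) * ('X - x1%:P) * ('X - x2%:P) * ('X - x3%:P) * ('X - x4%:P).
Proof.
move=> [-> -> -> -> ->]; rewrite /quintic /cP /cQ /cR /cS /cT.
rewrite !(polyCD, polyCN, polyCM); ring.
Qed.

Lemma quintic_inj (C : numClosedFieldType) (p q r s t p' q' r' s' t' : C) :
  quintic p q r s t = quintic p' q' r' s' t' -> [/\ p = p', q = q', r = r', s = s' & t = t'].
Proof.
move=> E; have co k := congr1 (fun P : {poly C} => P`_k) E.
move: (co 4%N) (co 3%N) (co 2%N) (co 1%N) (co 0%N).
rewrite /quintic /= !(coefD, coefCM, coefXn, coefX, coefC) /=.
move=> A B D F G. split.
- by move: A; rewrite !(mulr0, mulr1, add0r, addr0).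
- by move: B; rewrite !(mulr0, mulr1, add0r, addr0).
- by move: D; rewrite !(mulr0, mulr1, add0r, addr0).
- by move: F; rewrite !(mulr0, mulr1, add0r, addr0).
- by move: G; rewrite !(mulr0, mulr1, add0r, addr0).
Qed.

Lemma real41 (C : numClosedFieldType) (p q r s t a b : C) :
  p \is Num.real -> q \is Num.real -> r \is Num.real ->
  s \is Num.real -> t \is Num.real ->
  isV p q r s t a a a a b -> a != b -> a \is Num.real /\ b \is Num.real.
Proof.
move=> Rp Rq Rr Rs Rt H ab.
have key x : x^+5 + p*x^+4 + q*x^+3 + r*x^+2 + s*x + t = (x-a)^+4*(x-b).
  by case: (H) => -> -> -> -> ->; rewrite /cP /cQ /cR /cS /cT; ring.
have : ((a-a)^+4*(a-b))^* = 0 by rewrite subrr expr0n mul0r rmorph0.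
rewrite -key !rmorphD !rmorphXn (rmorphM _ p) (rmorphM _ q) (rmorphM _ r) (rmorphM _ s) !rmorphXn /= (conj_Creal Rp) (conj_Creal Rq)
  (conj_Creal Rr) (conj_Creal Rs) (conj_Creal Rt) key => /eqP.
rewrite mulf_eq0 expf_eq0 /= !subr_eq0 => /orP[] /eqP E.
- have Ra : a \is Num.real by apply/CrealP.
  case: (H) => Hp _ _ _ _.
  have -> : b = - p - (a + a + a + a) by rewrite Hp /cP; ring.
  by split => //; rewrite rpredB ?rpredN ?rpredD.
- exfalso; case: (H) => Hp _ _ _ _.
  have Eb : b^* = a by rewrite -E conjCK.
  have := conj_Creal Rp; rewrite Hp /cP !rmorphN !rmorphD /= E Eb => E2.
  have : 3 * (a - b) = 0.
    have -> : 3 * (a - b) = (a+a+a+a+b) - (b+b+b+b+a) by ring.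
    by rewrite -(opprK (a+a+a+a+b)) -E2 opprK subrr.
  move/eqP; rewrite mulf_eq0 pnatr_eq0 /= subr_eq0 => /eqP ba.
  by move: ab; rewrite ba eqxx.
Qed.

Lemma real32 (C : numClosedFieldType) (p q r s t a b : C) :
  p \is Num.real -> q \is Num.real -> r \is Num.real ->
  s \is Num.real -> t \is Num.real ->
  isV p q r s t a a a b b -> a != b -> a \is Num.real /\ b \is Num.real.
Proof.
move=> Rp Rq Rr Rs Rt H ab.
have key x : x^+5 + p*x^+4 + q*x^+3 + r*x^+2 + s*x + t = (x-a)^+3*(x-b)^+2.
  by case: (H) => -> -> -> -> ->; rewrite /cP /cQ /cR /cS /cT; ring.
have : ((a-a)^+3*(a-b)^+2)^* = 0 by rewrite subrr expr0n mul0r rmorph0.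
rewrite -key !rmorphD !rmorphXn (rmorphM _ p) (rmorphM _ q) (rmorphM _ r) (rmorphM _ s) !rmorphXn /= (conj_Creal Rp) (conj_Creal Rq)
  (conj_Creal Rr) (conj_Creal Rs) (conj_Creal Rt) key => /eqP.
rewrite mulf_eq0 !expf_eq0 /= !subr_eq0 => /orP[] /eqP E.
- have Ra : a \is Num.real by apply/CrealP.
  case: (H) => Hp _ _ _ _.
  have -> : b = (- p - (a + a + a)) / 2.
    by rewrite Hp /cP; field.
  split => //; rewrite rpredM ?rpredV ?rpredB ?rpredN ?rpredD ?rpred_nat ?rpred1 //.
- exfalso; case: (H) => Hp _ _ _ _.
  have Eb : b^* = a by rewrite -E conjCK.
  have := conj_Creal Rp; rewrite Hp /cP !rmorphN !rmorphD /= E Eb => E2.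
  have : (a - b) = 0.
    have -> : (a - b) = (a+a+a+b+b) - (b+b+b+a+a) by ring.
    by rewrite -(opprK (a+a+a+b+b)) -E2 opprK subrr.
  move/eqP; rewrite subr_eq0 => /eqP ba.
  by move: ab; rewrite ba eqxx.
Qed.

Lemma prod5 (C : numClosedFieldType) (alpha : 'I_5 -> C) :
  \prod_(i < 5) ('X - (alpha i)%:P) =
  ('X - (alpha (inord 0))%:P) * ('X - (alpha (inord 1))%:P) * ('X - (alpha (inord 2))%:P)
  * ('X - (alpha (inord 3))%:P) * ('X - (alpha (inord 4))%:P).
Proof.
rewrite !big_ord_recr big_ord0 /= mul1r.
do ![congr (_ * _)]; congr (_ - _); congr (_%:P); congr (alpha _); apply: val_inj; by rewrite /= inordK.
Qed.

Lemma discr_pair (C : numClosedFieldType) (alpha : 'I_5 -> C) :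
  discr5 alpha = 0 ->
  [\/ [\/ alpha (inord 0) = alpha (inord 1), alpha (inord 0) = alpha (inord 2),
          alpha (inord 0) = alpha (inord 3) | alpha (inord 0) = alpha (inord 4)],
       [\/ alpha (inord 1) = alpha (inord 2), alpha (inord 1) = alpha (inord 3)
         | alpha (inord 1) = alpha (inord 4)],
       [\/ alpha (inord 2) = alpha (inord 3) | alpha (inord 2) = alpha (inord 4)]
     | alpha (inord 3) = alpha (inord 4)].
Proof.
rewrite /discr5 => /eqP /prodf_eq0 [i _ /prodf_eq0 [j ij]].
rewrite expf_eq0 /= subr_eq0 => /eqP E.
have oE (k : 'I_5) : k = inord k by apply: val_inj; rewrite /= inordK.
rewrite (oE i) (oE j) in E.
move: ij E; case: i => [[|[|[|[|[|i]]]]] Hi] //; case: j => [[|[|[|[|[|j]]]]] Hj] //= _ E.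
all: by [constructor 1; constructor 1 | constructor 1; constructor 2 | constructor 1; constructor 3
  | constructor 1; constructor 4 | constructor 2; constructor 1 | constructor 2; constructor 2
  | constructor 2; constructor 3 | constructor 3; constructor 1 | constructor 3; constructor 2
  | constructor 4].
Qed.

Arguments main10 {C p q r s t x0 x1 x2 x3 x4}.
Arguments real41 {C p q r s t a b}.
Arguments real32 {C p q r s t a b}.
Arguments quintic_isV {C p q r s t x0 x1 x2 x3 x4}.
Arguments discr_pair {C alpha}.

Theorem mainTheorem4 (C : numClosedFieldType) (p q r s t : C)
  (alpha : 'I_5 -> C) :
  p \is Num.real -> q \is Num.real -> r \is Num.real ->
  s \is Num.real -> t \is Num.real ->
  quintic p q r s t = \prod_(i < 5) ('X - (alpha i)%:P) ->
  discr5 alpha = 0 -> L1 p q r s t = 0 -> L2 p q r s t = 0 ->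
  L3 p q r s t != 0 ->
  (forall i, alpha i \is Num.real) /\
  (M1 p q r s t = 0 ->
     exists a b : C, a != b /\
       quintic p q r s t = ('X - a%:P) ^+ 4 * ('X - b%:P)) /\
  (M1 p q r s t != 0 ->
     exists a b : C, a != b /\
       quintic p q r s t = ('X - a%:P) ^+ 3 * ('X - b%:P) ^+ 2).
Proof.
move=> Rp Rq Rr Rs Rt Hf HD H1 H2 H3.
have HV : isV p q r s t (alpha (inord 0)) (alpha (inord 1)) (alpha (inord 2))
            (alpha (inord 3)) (alpha (inord 4)).
  apply: quintic_inj; rewrite Hf prod5; symmetry; exact: quintic_isV.
have root_i i : (quintic p q r s t).[alpha i] = 0.
  by rewrite Hf horner_prod (bigD1 i) //= hornerXsubC subrr mul0r.
have [a [b [ab [HV4|HV3]]]] := main10 HV (discr_pair HD) H1 H2 H3.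
- have [Ra Rb] := real41 Rp Rq Rr Rs Rt HV4 ab.
  have Q : quintic p q r s t = ('X - a%:P)^+4 * ('X - b%:P).
    by rewrite (quintic_isV HV4); ring.
  split.
    move=> i; have := root_i i; rewrite Q hornerM !horner_exp !hornerXsubC => /eqP.
    by rewrite mulf_eq0 expf_eq0 /= !subr_eq0 => /orP[]/eqP->.
  split; first by move=> _; exists a, b.
  move=> M; exfalso; move/eqP: M; apply.
  case: HV4 => -> -> -> -> ->; rewrite /M1 /cP /cQ /cR /cS /cT; ring.
- have [Ra Rb] := real32 Rp Rq Rr Rs Rt HV3 ab.
  have Q : quintic p q r s t = ('X - a%:P)^+3 * ('X - b%:P)^+2.
    by rewrite (quintic_isV HV3); ring.
  split.
    move=> i; have := root_i i; rewrite Q hornerM !horner_exp !hornerXsubC => /eqP.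
    by rewrite mulf_eq0 !expf_eq0 /= !subr_eq0 => /orP[]/eqP->.
  split; last by move=> _; exists a, b.
  have -> : M1 p q r s t = - (12 * (a - b) ^+ 6).
    by case: HV3 => -> -> -> -> ->; rewrite /M1 /cP /cQ /cR /cS /cT; ring.
  move/eqP; rewrite oppr_eq0 mulf_eq0 pnatr_eq0 /= expf_eq0 /= subr_eq0.
  by rewrite (negbTE ab).
Qed.
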